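(* Let $p$ be a prime, $T=\mathbb{Z}(p^\infty)$ the Prüfer $p$-group, and $A$ a countable unbounded reduced $p$-group. Then $\boldsymbol\Pi^0_3$ is the complexity class of $\{0\}$ in $\mathrm{Hom}(T,E_\omega(A))$.
   Context: $L_\omega(A)=\varprojlim_{n<\omega}A/p^nA$ (the $p$-adic completion, a Polish group), $\kappa:A\to L_\omega(A)$ canonical, $E_\omega(A)=L_\omega(A)/\kappa(A)$, a group with a Polish cover (Polish group modulo a Polishable subgroup, i.e. the image of a continuous homomorphism from a Polish group). For a countable group $T$ and $G=\hat G/N$, $\mathrm{Hom}(T,G)$ is the group of homomorphisms $T\to G$, presented as $\hat H/N_H$: $\hat H$ is the Polish group of maps $\varphi:T\to\hat G$ with $\varphi(0)=0$ and $\varphi(a+b)-\varphi(a)-\varphi(b)\in N$, where $\varphi_i\to\varphi$ iff $(\varphi_i-\varphi)(a)\to0$ in $\hat G$ and $(\varphi_i-\varphi)(a+b)-(\varphi_i-\varphi)(a)-(\varphi_i-\varphi)(b)\to0$ in $N$ (with its Polish topology) for all $a,b$; $N_H=\{\varphi:\varphi(T)\subseteq N\}$. $\boldsymbol\Pi^0_3$ is the complexity class of $\{0\}$ if $N_H$ is $\boldsymbol\Pi^0_3$ but not $\boldsymbol\Sigma^0_3$ in $\hat H$. *)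

(* Defs.v *)
From HB Require Import structures.
From mathcomp Require Import all_boot all_order all_algebra.
From mathcomp Require Import boolp classical_sets.
Set Implicit Arguments. Unset Strict Implicit. Unset Printing Implicit Defensive.
Import Order.TTheory GRing.Theory Num.Theory.
Local Open Scope classical_set_scope.
Local Open Scope ring_scope.

Section Groups.
Variable A : zmodType.

Definition is_p_group (p : nat) : Prop :=
  forall a : A, exists k : nat, a *+ (p ^ k)%N = 0.

Definition is_bounded : Prop :=
  exists n : nat, (0 < n)%N /\ forall a : A, a *+ n = 0.

Definition is_subgroup (D : set A) : Prop :=
  D 0 /\ forall x y, D x -> D y -> D (x - y).

Definition is_divisible_subset (D : set A) : Prop :=
  forall d, D d -> forall n : nat, (0 < n)%N -> exists2 e, D e & e *+ n = d.

Definition is_reduced : Prop :=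
  forall D : set A, is_subgroup D -> is_divisible_subset D -> D `<=` [set 0].
End Groups.

(* The Pruefer p-group Z(p^oo) = Z[1/p]/Z, represented by the rationals *)
(* in [0,1) whose denominator is a power of p, with addition mod 1.     *)
Definition in_prufer (p : nat) (q : rat) : Prop :=
  0 <= q /\ q < 1 /\ exists k : nat, denq q = ((p ^ k)%N)%:Z.

Definition prufer_add (q r : rat) : rat :=
  if q + r < 1 then q + r else q + r - 1.

(* L_omega(A) = lim A/p^n A, elements are compatible families of cosets *)
Section Completion.
Variables (A : zmodType) (p : nat).

Definition pmulA (n : nat) : set A := [set a | exists b : A, a = b *+ (p ^ n)%N].
Definition cosetA (n : nat) (x : A) : set A := [set a | pmulA n (a - x)].

Definition Lcar := nat -> set A.

Definition isL (c : Lcar) : Prop :=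
  (forall n, exists x : A, c n = cosetA n x) /\ (forall n, c n.+1 `<=` c n).

Definition Lzero : Lcar := fun n => pmulA n.
Definition Lsub (c d : Lcar) : Lcar :=
  fun n => [set a | exists x y, c n x /\ d n y /\ a = x - y].

Definition kappa (a : A) : Lcar := fun n => cosetA n a.

(* hat H = { phi : T -> L_omega(A) | phi 0 = 0, cocycles in kappa(A) } ;
   phi is encoded on all of rat and required to be 0 off T. *)
Definition Hcar := rat -> Lcar.

Definition cocycle (phi : Hcar) (q r : rat) : Lcar :=
  Lsub (Lsub (phi (prufer_add q r)) (phi q)) (phi r).

Definition HatH : set Hcar :=
  [set phi | (forall q, in_prufer p q -> isL (phi q)) /\
             (forall q, ~ in_prufer p q -> phi q = Lzero) /\
             phi 0 = Lzero /\
             (forall q r, in_prufer p q -> in_prufer p r ->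
                 exists a : A, cocycle phi q r = kappa a)].

Definition NH : set Hcar :=
  [set phi | HatH phi /\ forall q, in_prufer p q -> exists a : A, phi q = kappa a].

(* Subbasis of the Polish topology of hat H: the initial topology for the
   evaluations phi |-> phi(q) into L_omega(A) (product of the discrete
   groups A/p^nA) and the cocycle maps phi |-> phi(q+r)-phi(q)-phi(r)
   into N = kappa(A) with its Polish (= discrete, N being countable)
   topology. *)
Definition Hsubbasis : set (set Hcar) :=
  [set U | (exists q n x, in_prufer p q /\ U = [set phi | phi q n = cosetA n x]) \/
           (exists q r a, in_prufer p q /\ in_prufer p r /\
                          U = [set phi | cocycle phi q r = kappa a])].
End Completion.

Arguments HatH : clear implicits.
Arguments NH : clear implicits.
Arguments Hsubbasis : clear implicits.

Section Borel.
Variables (X : Type) (B : set (set X)) (Y : set X).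

Definition gen_open (U : set X) : Prop :=
  U `<=` Y /\
  forall x, U x -> exists s : seq (set X),
      (forall V, V \in s -> B V /\ V x) /\
      (Y `&` [set y | forall V, V \in s -> V y]) `<=` U.

(* SigmaS n = Sigma^0_(n+1) *)
Fixpoint SigmaS (n : nat) : set X -> Prop :=
  match n with
  | 0 => gen_open
  | m.+1 => fun U => exists F : nat -> set X,
              (forall k, F k `<=` Y /\ SigmaS m (Y `\` F k)) /\
              U = \bigcup_k F k
  end.

(* Sigma^0_n and Pi^0_n for n >= 1 *)
Definition Sigma0 (n : nat) (U : set X) : Prop := SigmaS n.-1 U.
Definition Pi0 (n : nat) (U : set X) : Prop := U `<=` Y /\ Sigma0 n (Y `\` U).
End Borel.

(* Main.v *)
Require Import Defs.
From HB Require Import structures.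
From mathcomp Require Import all_boot all_order all_algebra.
From mathcomp Require Import boolp classical_sets.
From mathcomp Require Import cyclic ring lra zify.
Set Implicit Arguments. Unset Strict Implicit. Unset Printing Implicit Defensive.

Module M0.
Import Order.TTheory GRing.Theory Num.Theory.
Local Open Scope classical_set_scope.
Local Open Scope ring_scope.

Section Alg.
Variables (A : zmodType) (p : nat).

Lemma pmul0 n : pmulA p n (0 : A).
Proof. by exists 0; rewrite mul0rn. Qed.

Lemma pmulD n (a b : A) : pmulA p n a -> pmulA p n b -> pmulA p n (a + b).
Proof. by move=> [c ->] [d ->]; exists (c + d); rewrite mulrnDl. Qed.

Lemma pmulN n (a : A) : pmulA p n a -> pmulA p n (- a).
Proof. by move=> [c ->]; exists (- c); rewrite mulNrn. Qed.

Lemma pmulB n (a b : A) : pmulA p n a -> pmulA p n b -> pmulA p n (a - b).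
Proof. by move=> ha hb; apply: pmulD => //; apply: pmulN. Qed.

Lemma pmulMn n (a : A) m : pmulA p n a -> pmulA p n (a *+ m).
Proof. by move=> [c ->]; exists (c *+ m); rewrite -!mulrnA mulnC. Qed.

Lemma pmul_dvd n (a : A) m : (p ^ n %| m)%N -> pmulA p n (a *+ m).
Proof. by move=> /dvdnP [k ->]; exists (a *+ k); rewrite mulrnA. Qed.

Lemma pmul_mono m n (a : A) : (m <= n)%N -> pmulA p n a -> pmulA p m a.
Proof.
move=> lemn [c ->]; rewrite -(subnK lemn) expnD mulrnA.
by apply: pmul_dvd; rewrite dvdnn.
Qed.

Lemma pmul_sum n (I : Type) (r : seq I) (P : pred I) (F : I -> A) :
  (forall i, P i -> pmulA p n (F i)) -> pmulA p n (\sum_(i <- r | P i) F i).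
Proof.
move=> h; elim/big_ind: _ => //; [exact: pmul0|exact: pmulD].
Qed.

Definition pom (a : A) := forall n, pmulA p n a.

Lemma cosetE n (a b : A) : cosetA p n a = cosetA p n b <-> pmulA p n (a - b).
Proof.
split=> [h|h].
  have : cosetA p n a a by rewrite /cosetA /= subrr; apply: pmul0.
  by rewrite h.
rewrite /cosetA; apply/seteqP; split=> x /= hx.
  by have := pmulD hx h; rewrite addrA subrK.
by have := pmulB hx h; rewrite opprB addrA subrK.
Qed.

Definition Lof (w : nat -> A) : Lcar A := fun n => cosetA p n (w n).

Lemma Lof_eq w w' : (forall n, pmulA p n (w n - w' n)) -> Lof w = Lof w'.
Proof. by move=> h; apply: funext => n; apply/cosetE. Qed.

Lemma Lof_eqE w w' : Lof w = Lof w' -> forall n, pmulA p n (w n - w' n).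
Proof. by move=> h n; apply/cosetE; have := congr1 (fun f => f n) h. Qed.

Lemma kappaE a : kappa p a = Lof (fun _ => a).
Proof. by []. Qed.

Lemma LzeroE : @Lzero A p = Lof (fun _ => 0).
Proof.
apply: funext => n; rewrite /Lzero /Lof /cosetA.
by apply/seteqP; split=> x /=; rewrite subr0.
Qed.

Lemma Lsub_Lof w w' : Lsub (Lof w) (Lof w') = Lof (fun n => w n - w' n).
Proof.
apply: funext => n; apply/seteqP; split=> a /=.
  move=> [x [y [hx [hy ->]]]]; move: hx hy; rewrite /cosetA /= => hx hy.
  have := pmulB hx hy.
  rewrite /Lof /cosetA /=.
  suff -> : x - y - (w n - w' n) = x - w n - (y - w' n) by [].
  by rewrite !opprB addrACA [RHS]addrACA (addrC (- y)).
move=> ha; exists (a + w' n), (w' n); split; last split.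
- by move: ha; rewrite /Lof /cosetA /= opprB addrA.
- by rewrite /Lof /cosetA /= subrr; apply: pmul0.
- by rewrite addrK.
Qed.

Lemma isL_Lof w : (forall n, pmulA p n (w n.+1 - w n)) -> isL p (Lof w).
Proof.
move=> h; split=> [n|n]; first by exists (w n).
move=> x /=; rewrite /cosetA /= => hx.
have := pmulD (pmul_mono (leqnSn n) hx) (h n).
by rewrite addrA subrK.
Qed.

End Alg.

Lemma L1 (A : zmodType) (a b c d : A) : (a + b) - (c + d) = (a - c) + (b - d).
Proof. by rewrite opprD addrACA. Qed.
Lemma rearr (A : zmodType) (us uq ur as_ aq ar ws wq wr d : A) : wq + wr = ws + d ->
  (us + as_ + ws) - (uq + aq + wq) - (ur + ar + wr) - (as_ - aq - ar) = us - uq - ur - d.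
Proof.
move=> h.
rewrite (@L1 _ (us + as_)) (@L1 _ us) (@L1 _ (us - uq + (as_ - aq))) (@L1 _ (us - uq)).
rewrite (addrAC _ (ws - wq - wr)) addrK.
congr (_ + _); by rewrite -addrA -opprD h opprD addrA subrr add0r.
Qed.
Lemma L2 (A : zmodType) (a b c : A) : (b - c) - (b - a) = a - c.
Proof. by rewrite opprB addrC addrA subrK. Qed.

End M0.
Import M0.

Module M1.
Import Order.TTheory GRing.Theory Num.Theory.
Local Open Scope classical_set_scope.
Local Open Scope ring_scope.

Section Upper.
Variables (p : nat) (A : countZmodType).

Let Y := HatH A p.
Let B := Hsubbasis A p.

Lemma gen_open_set0 : gen_open B Y set0.
Proof. by split=> // x. Qed.

Lemma SigmaS1_Y : SigmaS B Y 1 Y.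
Proof.
exists (fun _ => Y); split.
  move=> k; split=> //; rewrite setDv; exact: gen_open_set0.
by apply/seteqP; split=> x /=; [move=> h; exists 0%N|case].
Qed.

Lemma ne_kappa (c : Lcar A) a : c <> kappa p a -> isL p c ->
  exists n x, c n = cosetA p n x /\ c n <> cosetA p n a.
Proof.
move=> ne [hc _]; apply: contra_notP ne => h; apply: funext => n.
have [x hx] := hc n; apply: contra_notP h => ne.
by exists n, x; split.
Qed.

Lemma upper : Pi0 B Y 3 (NH A p).
Proof.
split; first by move=> phi [].
rewrite /Sigma0 /=.
pose F k : set (Hcar A) := if unpickle k is Some q then
  (if pselect (in_prufer p q) then [set phi | Y phi /\ forall a, phi q <> kappa p a]
   else set0) else set0.
exists F; split.
  move=> k; rewrite /F; case: (unpickle k) => [q|]; last first.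
    by split=> //; rewrite setD0; exact: SigmaS1_Y.
  case: pselect => Tq; last by split=> //; rewrite setD0; exact: SigmaS1_Y.
  split; first by move=> phi [].
  pose G j : set (Hcar A) := if unpickle j is Some a then
    [set phi | Y phi /\ phi q = kappa p a] else set0.
  exists G; split.
    move=> j; rewrite /G; case: (unpickle j) => [a|]; last first.
      by split=> //; rewrite setD0; split=> // x Yx; exists [::]; split=> // y [].
    split; first by move=> phi [].
    split; first by move=> x [].
    move=> phi [Yphi nG].
    have ne : phi q <> kappa p a by move=> h; apply: nG.
    have [n [x [h1 h2]]] := ne_kappa ne (Yphi.1 q Tq).
    exists [:: [set psi | psi q n = cosetA p n x]]; split.
      move=> V; rewrite inE => /eqP ->; split=> //.
      by left; exists q, n, x.
    move=> psi [Ypsi hV]; split=> // -[_ hpsi].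
    have := hV [set psi | psi q n = cosetA p n x]; rewrite inE eqxx => /(_ isT).
    by rewrite /= hpsi /kappa => h; apply: h2; rewrite h1 -h.
  apply/seteqP; split=> phi /=.
    move=> [Yphi nF].
    have [a ha] : exists a, phi q = kappa p a.
      by apply: contra_notP nF => h; split=> // a ha; apply: h; exists a.
    by exists (pickle a) => //; rewrite /G pickleK.
  move=> [j _]; rewrite /G; case: (unpickle j) => [a|//] [Yphi ha].
  by split=> // -[_]; apply; exact: ha.
apply/seteqP; split=> phi /=.
  move=> [Yphi nN].
  have [q [Tq na]] : exists q, in_prufer p q /\ ~ exists a : A, phi q = kappa p a.
    apply: contra_notP nN => h; split=> // q Tq; apply: contrapT => na.
    by apply: h; exists q.
  exists (pickle q) => //; rewrite /F pickleK /=; destruct (pselect (in_prufer p q)) as [hT|]; last by [].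
  by split=> // b hb; apply: na; exists b.
move=> [k _]; rewrite /F; case: (unpickle k) => [q|//].
case: pselect => Tq //= [Yphi na]; split=> // -[_ h].
by have [a ha] := h q Tq; apply: (na a).
Qed.

End Upper.

End M1.
Import M1.

Module M2.

Definition X := nat -> nat -> bool.
Definition agree (M : nat) (x y : X) :=
  forall j i, j < M -> i < M -> x j i = y j i.
Definition openX (O : X -> Prop) :=
  forall x, O x -> exists M, forall y, agree M x y -> O y.
Definition closedX (E : X -> Prop) :=
  forall x, ~ E x -> exists M, forall y, agree M x y -> ~ E y.
Definition setb (x : X) k i b : X :=
  fun j i' => if (j == k) && (i' == i) then b else x j i'.
Definition CC (x : X) := forall j, exists n, forall i, n <= i -> x j i = false.
Definition rowsok (w0 : X) k (x : X) := forall j i, j < k -> x j i = w0 j i.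

Lemma agree_refl M x : agree M x x. Proof. by []. Qed.
Lemma agree_sym M x y : agree M x y -> agree M y x.
Proof. by move=> h j i hj hi; rewrite h. Qed.
Lemma agree_trans M x y z : agree M x y -> agree M y z -> agree M x z.
Proof. by move=> h1 h2 j i hj hi; rewrite h1 // h2. Qed.
Lemma agree_mono M M' x y : M <= M' -> agree M' x y -> agree M x y.
Proof.
by move=> le h j i hj hi; apply: h; apply: leq_trans le.
Qed.

Lemma up_ind (Q : nat -> Prop) n : Q n -> (forall l, n <= l -> Q l -> Q l.+1) ->
  forall l, n <= l -> Q l.
Proof.
move=> h0 hs; elim=> [|l IH]; first by rewrite leqn0 => /eqP <-.
rewrite leq_eqVlt => /orP [/eqP <-|hl] //.
by apply: hs => //; apply: IH.
Qed.

Section Baire.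
Variables (P : X -> Prop) (O : nat -> nat -> X -> Prop) (E : nat -> nat -> X -> Prop).
Hypothesis Oopen : forall k j, openX (O k j).
Hypothesis Eclosed : forall k a, closedX (E k a).
Hypothesis Eflip : forall k a x i, k < i ->
  E k a (setb x k i true) -> E k a (setb x k i false) -> False.
Hypothesis PE : forall k x, P x -> exists a, E k a x.
Hypothesis GP : forall k x, (forall j, O k j x) -> P x.

Section Inner.
Variables (k : nat) (w0 wI : X) (MI : nat).
Hypothesis okI : rowsok w0 k wI.
Let Bas w M x := rowsok w0 k x /\ agree M w x.
Hypothesis dense : forall w' M', rowsok w0 k w' -> MI <= M' -> agree MI wI w' ->
  exists x, Bas w' M' x /\ forall j, O k j x.

Let good (s : X * nat) := [/\ rowsok w0 k s.1, MI <= s.2 & agree MI wI s.1].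

Lemma inner_step j (s : X * nat) : exists s', good s ->
  [/\ good s', s.2 < s'.2, agree s.2 s.1 s'.1 &
      forall y, Bas s'.1 s'.2 y -> O k j y /\ ~ E k j y].
Proof.
case: (pselect (good s)) => gs; last by exists s.
case: s gs => w M [okw leM agw] /=.
have [x [[okx agx] Gx]] := dense okw leM agw.
pose i0 := (M + k.+1)%N.
have [x1 [[okx1 agx1] nE1]] : exists x1, Bas w M x1 /\ ~ E k j x1.
  case: (pselect (E k j x)) => hE; last by exists x.
  exists (setb x k i0 (~~ x k i0)); split; first split.
  - move=> j' i hj; rewrite /setb.
    have -> : (j' == k) = false by apply/eqP => e; rewrite e ltnn in hj.
    exact: okx.
  - move=> j' i hj hi; rewrite /setb.
    have -> : (i == i0) = false.
      by apply/eqP => e; move: hi; rewrite e /i0 ltnNge leq_addr.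
    by rewrite andbF; apply: agx.
  - have ex : x = setb x k i0 (x k i0).
      apply: funext => j'; apply: funext => i; rewrite /setb.
      by case: eqP => [->|] //=; case: eqP => [->|].
    have lt : k < i0 by rewrite /i0 addnS ltnS leq_addl.
    case hx : (x k i0) ex => ex /= hE'; rewrite ex in hE.
      exact: Eflip lt hE hE'.
    exact: Eflip lt hE' hE.
have [M1 hM1] := Eclosed nE1.
pose Ma := maxn M1 M.+1.
have leMa : M < Ma by rewrite /Ma leq_max leqnn orbT.
have agIx1 : agree MI wI x1.
  apply: agree_trans agw _; exact: agree_mono leM agx1.
have [x2 [[okx2 agx2] Gx2]] := dense okx1 (leq_trans leM (ltnW leMa)) agIx1.
have [M2 hM2] := Oopen (Gx2 j).
exists (x2, maxn M2 Ma) => _ /=; split.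
- split=> //=; first by apply: leq_trans (leq_maxr _ _); apply: leq_trans leM (ltnW leMa).
  apply: agree_trans agIx1 _; apply: agree_mono agx2.
  by apply: leq_trans leM (ltnW leMa).
- by apply: leq_trans leMa (leq_maxr _ _).
- apply: agree_trans agx1 _; apply: agree_mono agx2; exact: ltnW.
- move=> y [oky agy]; split.
    by apply: hM2; apply: agree_mono agy; apply: leq_maxl.
  apply: hM1; apply: agree_mono (leq_maxl M1 M.+1) _.
  apply: agree_trans agx2 _; apply: agree_mono agy; apply: leq_maxr.
Qed.

Lemma inner : False.
Proof.
pose f j := projT1 (choice (inner_step j)).
have hf j := projT2 (choice (inner_step j)).
pose s := fix s n := if n is n'.+1 then f n' (s n') else (wI, MI).
have gs : forall n, good (s n).
  elim=> [|n IH]; first by split.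
  by have [] := hf n (s n) IH.
have hs n : [/\ (s n).2 < (s n.+1).2, agree (s n).2 (s n).1 (s n.+1).1 &
      forall y, Bas (s n.+1).1 (s n.+1).2 y -> O k n y /\ ~ E k n y].
  by have [] := hf n (s n) (gs n).
have mono : forall n l, n <= l -> (s n).2 <= (s l).2.
  move=> n; apply: up_ind => // l _ IH.
  by apply: leq_trans IH (ltnW _); have [] := hs l.
have geq : forall n, n <= (s n).2.
  elim=> [|n IH] //; apply: leq_ltn_trans IH _; by have [] := hs n.
have agl : forall n l, n <= l -> agree (s n).2 (s n).1 (s l).1.
  move=> n; apply: up_ind => // l hl IH.
  apply: agree_trans IH _.
  have [_ h _] := hs l; apply: agree_mono h.
  by apply: mono.
pose z : X := fun j i => (s (maxn j i).+1).1 j i.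
have Bz : forall l, Bas (s l).1 (s l).2 z.
  move=> l; split.
    by move=> j i hj; rewrite /z; have [] := gs (maxn j i).+1; move=> ok _ _; apply: ok.
  move=> a b ha hb; rewrite /z; set m := (maxn a b).+1.
  case: (leqP l m) => hlm; first by apply: agl.
  symmetry; apply: (agl m l (ltnW hlm)).
    by apply: leq_trans (geq m); rewrite /m ltnS leq_maxl.
  by apply: leq_trans (geq m); rewrite /m ltnS leq_maxr.
have Gz : forall j, O k j z.
  by move=> j; have [_ _ h] := hs j; have [] := h z (Bz j.+1).
have [a Ea] := PE k (GP Gz).
have [_ _ h] := hs a; have [_] := h z (Bz a.+1); exact.
Qed.

End Inner.

Hypothesis PG : forall x, P x -> exists k, forall j, O k j x.
Hypothesis CP : forall x, CC x -> P x.

Lemma outer_step k (s : X * nat) : exists s',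
  [/\ rowsok s.1 k s'.1, s.2 <= s'.2, agree s.2 s.1 s'.1,
      (forall i, s'.2 <= i -> s'.1 k i = false) &
      forall y, rowsok s'.1 k.+1 y -> agree s'.2 s'.1 y -> ~ forall j, O k j y].
Proof.
case: s => w M /=.
have : ~ (forall w' M', rowsok w k w' -> M <= M' -> agree M w w' ->
  exists x, (rowsok w k x /\ agree M' w' x) /\ forall j, O k j x).
  by move=> h; apply: (@inner k w w M) => //.
move=> /existsNP [w' /existsNP [M' h]].
have [okw' [leM [agw' nex]]] : rowsok w k w' /\ M <= M' /\ agree M w w' /\
    ~ exists x, (rowsok w k x /\ agree M' w' x) /\ forall j, O k j x.
  apply: contrapT => nh; apply: h => ok1 le1 ag1; apply: contrapT => ne.
  by apply: nh.
pose w'' : X := fun j i => if (j == k) && (M' <= i) then false else w' j i.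
exists (w'', M'); split => //=.
- move=> j i hj; rewrite /w''.
  have -> : (j == k) = false by apply/eqP => e; rewrite e ltnn in hj.
  exact: okw'.
- move=> j i hj hi; rewrite /w''.
  have -> : (M' <= i) = false by apply/negbTE; rewrite -ltnNge; apply: leq_trans hi leM.
  by rewrite andbF; apply: agw'.
- by move=> i hi; rewrite /w'' eqxx hi.
- move=> y oky agy Gy; apply: nex; exists y; split=> //; split.
    move=> j i hj; rewrite (oky j i (ltnW hj)) /w''.
    have -> : (j == k) = false by apply/eqP => e; rewrite e ltnn in hj.
    by rewrite okw'.
  move=> j i hj hi; rewrite -(agy j i hj hi) /w''.
  have -> : (M' <= i) = false by apply/negbTE; rewrite -ltnNge.
  by rewrite andbF.
Qed.

Lemma diag : False.
Proof.
pose g k := projT1 (choice (outer_step k)).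
have hg k := projT2 (choice (outer_step k)).
pose t := fix t n := if n is n'.+1 then g n' (t n') else ((fun _ _ => false) : X, 0).
have ht n : [/\ rowsok (t n).1 n (t n.+1).1, (t n).2 <= (t n.+1).2,
    agree (t n).2 (t n).1 (t n.+1).1,
    (forall i, (t n.+1).2 <= i -> (t n.+1).1 n i = false) &
    forall y, rowsok (t n.+1).1 n.+1 y -> agree (t n.+1).2 (t n.+1).1 y ->
      ~ forall j, O n j y] by exact: hg.
have mono : forall n l, n <= l -> (t n).2 <= (t l).2.
  move=> n; apply: up_ind => // l _ IH.
  by apply: leq_trans IH _; have [] := ht l.
have hl : forall n l, n <= l ->
    rowsok (t n).1 n (t l).1 /\ agree (t n).2 (t n).1 (t l).1.
  move=> n; apply: up_ind => // l hl [ok ag].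
  have [ok1 _ ag1 _ _] := ht l; split.
    move=> j i hj; rewrite ok1 ?ok //; apply: leq_trans hj hl.
  apply: agree_trans ag _; apply: agree_mono ag1; exact: mono.
pose z : X := fun j i => (t j.+1).1 j i.
have Cz : CC z.
  by move=> j; exists (t j.+1).2 => i hi; have [_ _ _ h _] := ht j; apply: h.
have [k Gk] := PG (CP Cz).
have [_ _ _ _ h] := ht k; apply: (h z) => //.
  move=> j i hj; rewrite /z; have [ok _] := hl j.+1 k.+1 hj; by rewrite ok.
move=> a b ha hb; rewrite /z; case: (ltnP a k.+1) => hak.
  by have [ok _] := hl a.+1 k.+1 hak; rewrite ok.
by have [_ ag] := hl k.+1 a.+1 (ltnW (leq_ltn_trans hak (ltnSn _))); apply: ag.
Qed.

End Baire.

End M2.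
Import M2.

Module M3.
Import Order.TTheory GRing.Theory Num.Theory.
Local Open Scope ring_scope.

Definition Kq (p : nat) (q : rat) := logn p `|denq q|%N.
Definition Nq (q : rat) := `|numq q|%N.

Section Rat.
Variables (p : nat) (pp : prime p).

Lemma Tq_den q : in_prufer p q -> `|denq q|%N = (p ^ Kq p q)%N.
Proof. by move=> [_ [_ [k hk]]]; rewrite /Kq hk /= pfactorK. Qed.

Lemma Tq_num q : in_prufer p q -> numq q = (Nq q)%:Z.
Proof. by move=> [h0 _]; rewrite /Nq gez0_abs // numq_ge0. Qed.

Lemma Tq_denZ q : in_prufer p q -> denq q = (p ^ Kq p q)%N%:Z.
Proof. by move=> h; rewrite -Tq_den // gtz0_abs // denq_gt0. Qed.

Lemma Tq_val q K : in_prufer p q -> (Kq p q <= K)%N ->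
  q * (p ^ K)%:R = (Nq q * p ^ (K - Kq p q))%:R :> rat.
Proof.
move=> hq le; rewrite -{1}(divq_num_den q) Tq_num // Tq_denZ //.
rewrite -(subnK le) expnD !natrM subnK //.
have hp : ((p ^ Kq p q)%N%:R : rat) != 0.
  by rewrite pnatr_eq0 expn_eq0 negb_and -lt0n prime_gt0.
have E n : (n%:Z)%:~R = n%:R :> rat by [].
rewrite !E; field; exact: hp.
Qed.

Lemma den_dvd (x : rat) (d z : nat) : x * d%:R = z%:R -> (`|denq x| %| d)%N.
Proof.
move=> h.
have e : (numq x * d%:Z = z%:Z * denq x)%R.
  have E n : (n%:Z)%:~R = n%:R :> rat by [].
  by apply/eqP; rewrite -(eqr_int rat) !intrM numqE !E -h mulrAC.
have : (`|numq x| * d = z * `|denq x|)%N.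
  by have := congr1 absz e; rewrite !abszM.
move=> e2.
have : (`|denq x| %| `|numq x| * d)%N by rewrite e2 dvdn_mull.
by rewrite Gauss_dvdr // coprime_sym coprime_num_den.
Qed.

Lemma padd_T q r : in_prufer p q -> in_prufer p r ->
  let K := (Kq p q + Kq p r)%N in
  [/\ in_prufer p (prufer_add q r), (Kq p (prufer_add q r) <= K)%N &
  exists d : nat, (Nq (prufer_add q r) * p ^ (K - Kq p (prufer_add q r)) + d * p ^ K =
    Nq q * p ^ (K - Kq p q) + Nq r * p ^ (K - Kq p r))%N].
Proof.
move=> hq hr K; set s := prufer_add q r.
have Iq := Tq_val hq (leq_addr (Kq p r) _).
have Ir := Tq_val hr (leq_addl (Kq p q) _).
rewrite -/K in Iq Ir.
set P := ((p ^ K)%N%:R : rat) in Iq Ir.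
have [d [hs0 [hs1 hsd]]] : exists d : nat, 0 <= s /\ s < 1 /\ s + d%:R = q + r.
  have [q0 [q1 _]] := hq; have [r0 [r1 _]] := hr.
  rewrite /s /prufer_add; case: ifP => h.
    by exists 0%N; rewrite addr0; split=> //; apply: addr_ge0.
  exists 1%N; move/negbT: h; rewrite -leNgt => h.
  split; first by rewrite subr_ge0.
  by split; [lra | rewrite subrK].
set Iq' := (Nq q * p ^ (K - Kq p q))%N in Iq *.
set Ir' := (Nq r * p ^ (K - Kq p r))%N in Ir *.
have hP : 0 <= P by rewrite ler0n.
have e1 : s * P + (d * p ^ K)%N%:R = (Iq' + Ir')%N%:R.
  by rewrite natrM natrD -Iq -Ir -/P -!mulrDl hsd.
have led : (d * p ^ K <= Iq' + Ir')%N.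
  rewrite -(ler_nat rat) -e1 lerDr; exact: mulr_ge0.
set z := (Iq' + Ir' - d * p ^ K)%N.
have e2 : s * P = z%:R by rewrite /z natrB // -e1 addrK.
have [j lej ej] := dvdn_pfactor _ _ pp (den_dvd e2).
have hs : in_prufer p s.
  split=> //; split=> //; exists j; by rewrite -ej gtz0_abs // denq_gt0.
have Ks : Kq p s = j by rewrite /Kq ej pfactorK.
split=> //; first by rewrite Ks.
exists d; have := Tq_val hs (_ : (Kq p s <= K)%N); rewrite Ks => /(_ lej).
rewrite -/P e2 => /eqP; rewrite eqr_nat => /eqP <-.
by rewrite /z subnK.
Qed.

End Rat.

End M3.
Import M3.

Module M4.
Import Order.TTheory GRing.Theory Num.Theory.
Local Open Scope classical_set_scope.
Local Open Scope ring_scope.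

Section Cons.
Variables (p : nat) (pp : prime p) (A : zmodType) (e : nat -> A).
Hypothesis he1 : forall i, pom p (e i *+ p ^ i.+1).
Hypothesis he2 : forall i, ~ pom p (e i *+ p ^ i).

Definition cc (x : X) i : nat := (\sum_(j < i) (x j i : nat) * p ^ j)%N.
Definition tt x k i : A := if (k <= i)%N then e i *+ (cc x i * p ^ (i.+1 - k)) else 0.
Definition SS x k m := \sum_(i < m) tt x k i.
Definition YY x k n := SS x k (n + k).
Definition phi x : Hcar A := fun q =>
  if pselect (in_prufer p q) then Lof p (fun n => YY x (Kq p q) n *+ Nq q) else Lzero p.

Lemma pom_pmul n (a : A) : pom p a -> pmulA p n a.
Proof. by apply. Qed.

Lemma pom_e i m : (p ^ i.+1 %| m)%N -> pom p (e i *+ m).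
Proof.
move=> /dvdnP [k ->] n; rewrite mulnC mulrnA; apply: pmulMn; exact: he1.
Qed.

Lemma tt_tail x k n i : (n + k <= i)%N -> pmulA p n (tt x k i).
Proof.
move=> h; rewrite /tt ifT; last by lia.
apply: pmul_dvd; apply: dvdn_mull; rewrite dvdn_exp2l //; lia.
Qed.

Lemma SS_tail x k n m : (n + k <= m)%N -> pmulA p n (SS x k m - SS x k (n + k)).
Proof.
move: m; apply: (up_ind (Q := fun m => pmulA p n (SS x k m - SS x k (n + k)))).
  by rewrite subrr; exact: pmul0.
move=> m hm IH; rewrite /SS big_ord_recr /= addrAC.
by apply: pmulD => //; apply: tt_tail.
Qed.

Lemma YY_step x k n : pmulA p n (YY x k n.+1 - YY x k n).
Proof.
rewrite /YY addSn /SS big_ord_recr /= addrAC subrr add0r.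
by apply: tt_tail.
Qed.

Lemma SS_shift x k K n : (k <= K)%N ->
  SS x k (n + K) = SS x k K + SS x K (n + K) *+ p ^ (K - k).
Proof.
move=> le; rewrite /SS -sumrMnl (@big_ord_widen _ _ _ K (n + K) (tt x k)) ?leq_addl //.
rewrite [X in _ = X + _]big_mkcond /= -big_split /=; apply: eq_bigr => i _.
case: (ltnP i K) => hi.
  rewrite /tt [in X in _ = _ + X]ifF ?mul0rn ?addr0 //.
  by apply/negbTE; rewrite -ltnNge.
rewrite add0r /tt ifT; last by apply: leq_trans hi.
rewrite ifT // -mulrnA -mulnA -expnD; congr (_ *+ (_ * p ^ _)); lia.
Qed.

Lemma YY_shift x k K n : (k <= K)%N ->
  pmulA p n (YY x k n - (SS x k K + YY x K n *+ p ^ (K - k))).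
Proof.
move=> le; rewrite /YY -SS_shift // -opprB; apply: pmulN.
by apply: SS_tail; rewrite leq_add2l.
Qed.

Lemma YY_pK x K n : pmulA p n (YY x K n *+ p ^ K).
Proof.
rewrite /YY /SS -sumrMnl; apply: pmul_sum => i _; rewrite /tt.
case: ifP => h; last by rewrite mul0rn; exact: pmul0.
rewrite -mulrnA; apply: pom_pmul; apply: pom_e.
rewrite -mulnA -expnD; apply: dvdn_mull; rewrite dvdn_exp2l //; lia.
Qed.

Lemma phi_T x q : in_prufer p q ->
  phi x q = Lof p (fun n => YY x (Kq p q) n *+ Nq q).
Proof. by rewrite /phi; case: pselect. Qed.

Lemma phi_nT x q : ~ in_prufer p q -> phi x q = Lzero p.
Proof. by rewrite /phi; case: pselect. Qed.

Lemma T0 : in_prufer p 0.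
Proof. by split=> //; split=> //; exists 0%N. Qed.

Definition acoc x q r : A :=
  let s := prufer_add q r in let K := (Kq p q + Kq p r)%N in
  SS x (Kq p s) K *+ Nq s - SS x (Kq p q) K *+ Nq q - SS x (Kq p r) K *+ Nq r.

Lemma cocycle_phi x q r : in_prufer p q -> in_prufer p r ->
  cocycle (phi x) q r = kappa p (acoc x q r).
Proof.
move=> hq hr; have [hs leK [dd hd]] := padd_T pp hq hr.
rewrite /cocycle !phi_T // !Lsub_Lof kappaE /acoc; apply: Lof_eq => n.
set K := (Kq p q + Kq p r)%N in leK hd *.
set W := YY x K n.
have dec k N : (k <= K)%N -> exists u, pmulA p n u /\
    YY x k n *+ N = u + SS x k K *+ N + W *+ (N * p ^ (K - k)).
  move=> le; exists ((YY x k n - (SS x k K + W *+ p ^ (K - k))) *+ N); split.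
    by apply: pmulMn; apply: YY_shift.
  rewrite mulnC mulrnA -!mulrnDl; congr (_ *+ _).
  by rewrite -addrA subrK.
have [us [hus ->]] := dec _ (Nq (prufer_add q r)) leK.
have [uq [huq ->]] := dec _ (Nq q) (leq_addr _ _).
have [ur [hur ->]] := dec _ (Nq r) (leq_addl _ _).
rewrite (@rearr _ _ _ _ _ _ _ _ _ _ (W *+ (dd * p ^ K))); last by rewrite -!mulrnDr hd.
apply: pmulB; last by rewrite mulnC mulrnA; apply: pmulMn; apply: YY_pK.
by apply: pmulB; [apply: pmulB|].
Qed.

Lemma phi_H x : HatH A p (phi x).
Proof.
split; [|split; [|split]].
- move=> q hq; rewrite phi_T //; apply: isL_Lof => n.
  by rewrite -mulrnBl; apply: pmulMn; apply: YY_step.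
- by move=> q hq; rewrite phi_nT.
- rewrite phi_T; last exact: T0.
  rewrite LzeroE; apply: Lof_eq => n; rewrite /Nq (_ : numq 0 = 0) // mulr0n subrr.
  exact: pmul0.
- by move=> q r hq hr; exists (acoc x q r); apply: cocycle_phi.
Qed.

Lemma cc_agree x y M i : agree M x y -> (i < M)%N -> cc x i = cc y i.
Proof.
move=> ag hi; rewrite /cc; apply: eq_bigr => j _; rewrite ag //.
by apply: ltn_trans hi.
Qed.

Lemma SS_agree x y M k m : agree M x y -> (m <= M)%N -> SS x k m = SS y k m.
Proof.
move=> ag hm; rewrite /SS; apply: eq_bigr => i _; rewrite /tt (cc_agree ag) //.
by apply: leq_trans hm.
Qed.

Lemma phi_agree x y M q n : agree M x y -> (n + Kq p q <= M)%N ->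
  phi x q n = phi y q n.
Proof.
move=> ag hM; rewrite /phi; destruct (pselect (in_prufer p q)) as [hT|hT]; last by [].
by rewrite /Lof /= /YY (SS_agree _ ag hM).
Qed.

Lemma acoc_agree x y M q r : agree M x y -> (Kq p q + Kq p r <= M)%N ->
  acoc x q r = acoc y q r.
Proof. by move=> ag hM; rewrite /acoc !(SS_agree _ ag hM). Qed.

Lemma sub_cont x V : Hsubbasis A p V -> V (phi x) ->
  exists M, forall y, agree M x y -> V (phi y).
Proof.
case=> [[q [n [c [hq ->]]]]|[q [r [a [hq [hr ->]]]]]] /= hV.
  by exists (n + Kq p q)%N => y ag; rewrite -(phi_agree ag).
exists (Kq p q + Kq p r)%N => y ag.
by rewrite cocycle_phi // -(acoc_agree ag) // -cocycle_phi.
Qed.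

Lemma seq_cont x (s : seq (set (Hcar A))) :
  (forall V, V \in s -> Hsubbasis A p V /\ V (phi x)) ->
  exists M, forall y, agree M x y -> forall V, V \in s -> V (phi y).
Proof.
elim: s => [|V s IH] h; first by exists 0%N.
have [M1 h1] : exists M, forall y, agree M x y -> V (phi y).
  by have [] := h V (mem_head _ _); apply: sub_cont.
have [M2 h2] := IH (fun W hW => h W (mem_behead (s:=V :: s) hW)).
exists (maxn M1 M2) => y ag W; rewrite inE => /orP [/eqP ->|hW].
  by apply: h1; apply: agree_mono ag; apply: leq_maxl.
by apply: h2 => //; apply: agree_mono ag; apply: leq_maxr.
Qed.

Lemma open_pre U : gen_open (Hsubbasis A p) (HatH A p) U -> openX (fun x => U (phi x)).
Proof.
move=> [_ hU] x Ux; have [s [hs hsub]] := hU _ Ux.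
have [M hM] := seq_cont hs.
exists M => y ag; apply: hsub; split; first exact: phi_H.
exact: hM.
Qed.

End Cons.

End M4.
Import M4.

Module M5.
Import Order.TTheory GRing.Theory Num.Theory.
Local Open Scope classical_set_scope.
Local Open Scope ring_scope.

Section Cons2.
Variables (p : nat) (pp : prime p) (A : countZmodType) (e : nat -> A).
Hypothesis he1 : forall i, pom p (e i *+ p ^ i.+1).
Hypothesis he2 : forall i, ~ pom p (e i *+ p ^ i).

Definition qk k : rat := ((p ^ k.+1)%N%:R)^-1.

Lemma p_gt1 : (1 < p)%N. Proof. exact: prime_gt1. Qed.

Lemma qk_prop k : [/\ in_prufer p (qk k), Kq p (qk k) = k.+1 & Nq (qk k) = 1%N].
Proof.
have P1 : (1 < p ^ k.+1)%N.
  by rewrite -{1}(expn0 p) ltn_exp2l // p_gt1.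
have hd : denq (qk k) = (p ^ k.+1)%N%:Z.
  by have := @denqVz (p ^ k.+1)%N%:Z; rewrite eqz_nat -lt0n; move/(_ (ltnW P1)).
have hT : in_prufer p (qk k).
  split; first by rewrite invr_ge0 ler0n.
  split; first by rewrite invf_lt1 ?ltr0n ?ltr1n // (ltnW P1).
  by exists k.+1.
have hK : Kq p (qk k) = k.+1 by rewrite /Kq hd /= pfactorK.
split=> //.
have := Tq_val pp hT (leqnn (Kq p (qk k))); rewrite subnn expn0 muln1 hK.
rewrite /qk mulVf ?pnatr_eq0 -?lt0n ?(ltnW P1) //.
by move=> h; apply/eqP; rewrite -(eqr_nat rat) -h.
Qed.

Definition EE k a x : Prop :=
  if unpickle a is Some b then phi p e x (qk k) = kappa p b else False.

Lemma phi_qk x k : phi p e x (qk k) = Lof p (YY p e x k.+1).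
Proof.
have [hT hK hN] := qk_prop k.
rewrite phi_T // hK hN; congr (Lof p _); apply: funext => n; exact: mulr1n.
Qed.

Lemma Lof_neq (w w' : nat -> A) : Lof p w <> Lof p w' ->
  exists n, ~ pmulA p n (w n - w' n).
Proof.
move=> ne; apply: contrapT => h; apply: ne; apply: Lof_eq => n.
by apply: contrapT => hn; apply: h; exists n.
Qed.

Lemma EE_closed k a : closedX (EE k a).
Proof.
move=> x; rewrite /EE; case: (unpickle a) => [b|]; last by exists 0%N.
rewrite phi_qk kappaE => /Lof_neq [n hn].
exists (n + k.+1)%N => y ag; rewrite phi_qk => h; apply: hn.
have := Lof_eqE h n; by rewrite /YY (SS_agree p e k.+1 ag (leqnn _)).
Qed.

Lemma cc_setb_other x k i b j : j != i -> cc p (setb x k i b) j = cc p x j.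
Proof.
move=> ne; rewrite /cc; apply: eq_bigr => l _; rewrite /setb.
by rewrite (negbTE ne) andbF.
Qed.

Lemma cc_setb x k i : (k < i)%N ->
  cc p (setb x k i true) i = (cc p (setb x k i false) i + p ^ k)%N.
Proof.
move=> ki.
have E : forall j : 'I_i, j != Ordinal ki ->
    ((setb x k i true j i : nat) * p ^ j = (setb x k i false j i : nat) * p ^ j)%N.
  move=> j hj; rewrite /setb.
  have -> : ((j : nat) == k) = false.
    by apply/negbTE; apply: contra hj => /eqP h; apply/eqP; apply: val_inj.
  by [].
rewrite /cc (bigD1 (Ordinal ki)) //= [in RHS](bigD1 (Ordinal ki)) //=.
rewrite (eq_bigr _ E) /setb !eqxx /=.
by rewrite mul1n mul0n add0n addnC.
Qed.

Lemma SS_flip x k i m : (k < i)%N -> (i < m)%N ->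
  SS p e (setb x k i true) k.+1 m - SS p e (setb x k i false) k.+1 m = e i *+ p ^ i.
Proof.
move=> ki im; rewrite /SS -sumrB (bigD1 (Ordinal im)) //= big1 ?addr0.
  rewrite /tt !ifT // cc_setb // mulnDl mulrnDr addrAC subrr add0r -expnD.
  by congr (_ *+ p ^ _); lia.
move=> j hj; rewrite /tt !cc_setb_other //; first by case: ifP; rewrite subrr.
Qed.

Lemma EE_flip k a x i : (k < i)%N ->
  EE k a (setb x k i true) -> EE k a (setb x k i false) -> False.
Proof.
move=> ki; rewrite /EE; case: (unpickle a) => [b|//]; rewrite !phi_qk => h1 h0.
have h := Lof_eqE (etrans h1 (esym h0)).
suff hP : pom p (e i *+ p ^ i) by exact: he2 hP.
move=> n.
have := h (maxn n i); rewrite /YY SS_flip //; last by lia.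
by apply: pmul_mono; apply: leq_maxl.
Qed.

Lemma rows_bound x : CC x -> forall k, exists B, forall j i,
  (j < k)%N -> (B <= i)%N -> x j i = false.
Proof.
move=> hC; elim=> [|k [B hB]]; first by exists 0%N.
have [n hn] := hC k; exists (maxn B n) => j i hj hi.
move: hj; rewrite ltnS leq_eqVlt => /orP [/eqP ->|hj].
  by apply: hn; apply: leq_trans hi; apply: leq_maxr.
by apply: hB => //; apply: leq_trans hi; apply: leq_maxl.
Qed.

Lemma pomD (a b : A) : pom p a -> pom p b -> pom p (a + b).
Proof. by move=> ha hb n; apply: pmulD. Qed.
Lemma pomB (a b : A) : pom p a -> pom p b -> pom p (a - b).
Proof. by move=> ha hb n; apply: pmulB. Qed.
Lemma pom0 : pom p (0 : A).
Proof. by move=> n; apply: pmul0. Qed.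

Lemma CC_NH x : CC x -> NH A p (phi p e x).
Proof.
move=> hC; split; first exact: (@phi_H p pp A e he1 x).
move=> q hq; rewrite phi_T //; set k := Kq p q.
have [B hB] := rows_bound hC k.
set B' := maxn B k.
have tpom : forall i, (B' <= i)%N -> pom p (tt p e x k i).
  move=> i hi; rewrite /tt ifT; last by apply: leq_trans hi; apply: leq_maxr.
  apply: pom_e => //.
  have : (p ^ k %| cc p x i)%N.
    apply: dvdn_sum => j _; case: (ltnP j k) => hj.
      have -> : x j i = false.
        by apply: hB => //; apply: leq_trans hi; apply: leq_maxl.
      by rewrite mul0n dvdn0.
    by apply: dvdn_mull; rewrite dvdn_exp2l.
  move=> /dvdnP [c ->]; rewrite -mulnA -expnD; apply: dvdn_mull.
  rewrite subnKC //; move: hi; rewrite geq_max => /andP [_ h].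
  exact: leq_trans h (leqnSn _).
have Spom : forall m, (B' <= m)%N -> pom p (SS p e x k m - SS p e x k B').
  move=> m; apply: (up_ind (Q := fun m => pom p (SS p e x k m - SS p e x k B'))).
    by rewrite subrr; apply: pom0.
  move=> l hl IH; rewrite /SS big_ord_recr /= addrAC; apply: pomD => //.
  exact: tpom.
exists (SS p e x k B' *+ Nq q); rewrite kappaE; apply: Lof_eq => n.
rewrite -mulrnBl; apply: pmulMn.
set m := maxn (n + k) B'.
have h1 := SS_tail pp e x (leq_maxl (n + k) B').
have h2 := Spom m (leq_maxr _ _) n.
by rewrite /YY -(@L2 _ _ (SS p e x k m)); apply: pmulB.
Qed.

Lemma NH_EE k x : NH A p (phi p e x) -> exists a, EE k a x.
Proof.
move=> [_ h]; have [hT _ _] := qk_prop k.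
have [b hb] := h _ hT; exists (pickle b); by rewrite /EE pickleK.
Qed.

End Cons2.

End M5.
Import M5.

Module M6.
Import Order.TTheory GRing.Theory Num.Theory.
Local Open Scope classical_set_scope.
Local Open Scope ring_scope.

Section Grp.
Variables (p : nat) (pp : prime p) (A : zmodType).
Hypotheses (hpg : is_p_group A p) (hred : is_reduced A) (hunb : ~ is_bounded A).

Lemma modMn (d : A) P N : d *+ P = 0 -> d *+ N = d *+ (N %% P).
Proof.
move=> h; rewrite {1}(divn_eq N P) mulrnDr mulnC mulrnA h mul0rn add0r //.
Qed.

Lemma unb_q n : exists b : A, ~ pom p (b *+ p ^ n).
Proof.
apply: contrapT => hn.
have hall : forall b : A, pom p (b *+ p ^ n).
  by move=> b; apply: contrapT => hb; apply: hn; exists b.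
apply: hunb; exists (p ^ n)%N; split; first by rewrite expn_gt0 prime_gt0.
move=> a.
have sub : is_subgroup (pmulA (A:=A) p n).
  by split; [exact: pmul0 | move=> x y; exact: pmulB].
have hdivp : forall (j : nat) (d : A), pmulA p n d -> exists2 d', pmulA p n d' & d' *+ (p ^ j)%N = d.
  elim=> [|j IH] d hd; first by exists d; rewrite ?expn0 ?mulr1n.
  have [d1 [c hc] e1] := IH d hd.
  have [c' hc'] := hall c n.+1.
  exists (c' *+ p ^ n); first by exists c'.
  by rewrite expnS mulrnA -[c' *+ _ *+ p]mulrnA -expnSr -hc' -hc e1.
have div : is_divisible_subset (pmulA (A:=A) p n).
  move=> d hd m m0.
  have [u cu em] := pfactor_coprime pp m0.
  set j := logn p m in em.
  have [dj hdj ej] := hdivp j d hd.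
  have [s hs] := hpg d.
  set P := (p ^ s)%N in hs.
  have cuP : coprime u P by rewrite coprime_sym coprimeXl.
  set v := (u ^ (totient P).-1)%N.
  have uv : (u * v = 1 %[mod P])%N.
    rewrite /v -expnS prednK ?totient_gt0 ?expn_gt0 ?prime_gt0 //.
    exact: Euler_exp_totient.
  exists (dj *+ v); first exact: pmulMn.
  rewrite em -mulrnA.
  have -> : (v * (u * p ^ j) = p ^ j * (u * v))%N by rewrite mulnCA [RHS]mulnC -mulnA.
  rewrite mulrnA ej.
  by rewrite (modMn (u * v) hs) uv -(modMn 1 hs).
by have := hred sub div (_ : pmulA p n (a *+ p ^ n)); apply; exists a.
Qed.

Lemma exists_e n : exists e : A, pom p (e *+ p ^ n.+1) /\ ~ pom p (e *+ p ^ n).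
Proof.
have [b hb] := unb_q n.
have [s hs] := hpg b.
have key : forall m, pom p (b *+ (p ^ (n + m))%N) ->
    exists e : A, pom p (e *+ p ^ n.+1) /\ ~ pom p (e *+ p ^ n).
  elim=> [|m IH]; first by rewrite addn0.
  move=> h; case: (pselect (pom p (b *+ (p ^ (n + m))%N))) => hm; first exact: IH.
  exists (b *+ p ^ m); split.
    by rewrite -mulrnA -expnD addnS -addSn addnC.
  by rewrite -mulrnA -expnD addnC.
apply: (key s); rewrite expnD mulnC mulrnA hs mul0rn => k; exact: pmul0.
Qed.

End Grp.


End M6.
Import M6.

Import Order.TTheory GRing.Theory Num.Theory.
Local Open Scope classical_set_scope.
Local Open Scope ring_scope.
Theorem lemma4p13 (p : nat) (A : countZmodType) :
  prime p ->
  is_p_group A p -> is_reduced A -> ~ is_bounded A ->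
  Pi0 (Hsubbasis A p) (HatH A p) 3 (NH A p) /\
  ~ Sigma0 (Hsubbasis A p) (HatH A p) 3 (NH A p).
Proof.
move=> pp hpg hred hunb; split; first exact: upper.
move=> hS.
case: (choice (exists_e pp hpg hred hunb)) => e he.
have he1 i := (he i).1.
have he2 i := (he i).2.
move: hS; rewrite /Sigma0 /= => -[F [hF hNH]].
have hE : forall k, exists Ef : nat -> set (Hcar A),
    (forall j, Ef j `<=` HatH A p /\ gen_open (Hsubbasis A p) (HatH A p) (HatH A p `\` Ef j)) /\
    HatH A p `\` F k = \bigcup_j Ef j.
  by move=> k; have [_ [Ef hEf]] := hF k; exists Ef.
case: (choice hE) => Ef hEf.
pose O k j x := (HatH A p `\` Ef k j) (phi p e x).
apply: (@diag (fun x => NH A p (phi p e x)) O (EE p e)).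
- by move=> k j; apply: (open_pre pp he1); have [h _] := hEf k; exact: (h j).2.
- by move=> k a; apply: EE_closed.
- by move=> k a x i ki; apply: EE_flip.
- by move=> k x hx; apply: NH_EE.
- move=> k x hO; rewrite hNH; exists k => //.
  apply: contrapT => nF.
  have : (HatH A p `\` F k) (phi p e x) by split=> //; exact: phi_H.
  have [_ ->] := hEf k; move=> [j _ hj].
  by have [_] := hO j; apply.
- move=> x; rewrite hNH => -[k _ hk]; exists k => j; split; first exact: phi_H.
  move=> hj; have : (HatH A p `\` F k) (phi p e x).
    by have [_ ->] := hEf k; exists j.
  by move=> [_]; apply.
- by move=> x hx; apply: CC_NH.
Qed.
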